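(* Let $L$ be a frame and $\mathcal F\subseteq\mathsf{Filt}(L)$ such that for every $F\in\mathcal F$ and $a\in L$, the filter $\{x\in L\mid x\vee a\in F\}$ belongs to $\mathcal F$. Then $\mathrm{Int}(\mathcal F)$ is a subcolocale of the coframe $(\mathsf{Filt}(L),\sqsubseteq)$; that is, $\mathrm{Int}(\mathcal F)$ is closed under all joins (intersections) of $\mathsf{Filt}(L)$, and $H\setminus G\in\mathrm{Int}(\mathcal F)$ for all $H\in\mathrm{Int}(\mathcal F)$ and $G\in\mathsf{Filt}(L)$.
   Context: A frame is a complete lattice $L$ with $(\bigvee A)\wedge b=\bigvee_{a\in A}(a\wedge b)$. A filter is a nonempty up-closed subset closed under finite meets. $\mathsf{Filt}(L)$ denotes the set of filters ordered by reverse inclusion ($F\sqsubseteq G$ iff $G\subseteq F$); it is a coframe in which joins are intersections and the co-Heyting difference is $H\setminus G=\{a\in L\mid\forall b\in G,\ b\vee a\in H\}$, characterised by $H\setminus G\sqsubseteq F$ iff $H\sqsubseteq F\sqcup G$. $\mathrm{Int}(\mathcal F)$ is the set of intersections of subfamilies of $\mathcal F$ (empty intersection $=L$). *)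

(* Defs.v *)
Record frame := Frame {
  carrier :> Type;
  le : carrier -> carrier -> Prop;
  le_refl : forall x, le x x;
  le_trans : forall x y z, le x y -> le y z -> le x z;
  le_antisym : forall x y, le x y -> le y x -> x = y;
  sup : (carrier -> Prop) -> carrier;
  sup_ub : forall (A : carrier -> Prop) a, A a -> le a (sup A);
  sup_least : forall (A : carrier -> Prop) b,
      (forall a, A a -> le a b) -> le (sup A) b;
  meet : carrier -> carrier -> carrier;
  meet_glb : forall x a b, le x (meet a b) <-> (le x a /\ le x b);
  frame_distr : forall (A : carrier -> Prop) b,
      meet (sup A) b = sup (fun c => exists a, A a /\ c = meet a b)
}.

Definition join (L : frame) (a b : L) : L := sup L (fun c => c = a \/ c = b).

Definition same_set {T : Type} (A B : T -> Prop) : Prop := forall x, A x <-> B x.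

Definition is_filter (L : frame) (F : L -> Prop) : Prop :=
  (exists a, F a) /\
  (forall a b, F a -> le L a b -> F b) /\
  (forall a b, F a -> F b -> F (meet L a b)).

(* Intersection of a family of subsets (empty intersection = L) *)
Definition bigcap {T : Type} (S : (T -> Prop) -> Prop) : T -> Prop :=
  fun x => forall F, S F -> F x.

Definition Int (L : frame) (FF : (L -> Prop) -> Prop) : (L -> Prop) -> Prop :=
  fun G => exists S : (L -> Prop) -> Prop,
      (forall F, S F -> FF F) /\ same_set G (bigcap S).

(* co-Heyting difference in Filt(L): H \ G = {a | forall b in G, b \/ a in H} *)
Definition filt_diff (L : frame) (H G : L -> Prop) : L -> Prop :=
  fun a => forall b, G b -> H (join L b a).

(* Main.v *)
Require Import Defs.

Lemma join_comm (L : frame) (a b : L) : join L a b = join L b a.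
Proof.
  unfold join. apply le_antisym; apply sup_least; intros c [->| ->];
  apply sup_ub; tauto.
Qed.

Theorem mainTheorem8 (L : frame) (FF : (L -> Prop) -> Prop)
  (hFilt : forall F, FF F -> is_filter L F)
  (hclosed : forall F (a : L), FF F ->
      exists F', FF F' /\ same_set F' (fun x => F (join L x a))) :
  (* Int(FF) is a subset of Filt(L) *)
  (forall H, Int L FF H -> is_filter L H) /\
  (* closed under all joins of Filt(L), i.e. arbitrary intersections *)
  (forall GG : (L -> Prop) -> Prop,
      (forall G, GG G -> Int L FF G) -> Int L FF (bigcap GG)) /\
  (* closed under co-Heyting difference with arbitrary filters *)
  (forall H G, Int L FF H -> is_filter L G -> Int L FF (filt_diff L H G)).
Proof.
  split; [|split].
  - intros H [S [HS Heq]]. split; [|split].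
    + exists (sup L (fun _ => True)). apply Heq. intros F SF.
      destruct (hFilt F (HS F SF)) as [[a Fa] [Hup _]].
      apply (Hup a). exact Fa. apply sup_ub. exact I.
    + intros a b Ha Hab. apply Heq. intros F SF.
      destruct (hFilt F (HS F SF)) as [_ [Hup _]].
      apply (Hup a); auto. apply Heq; auto.
    + intros a b Ha Hb. apply Heq. intros F SF.
      destruct (hFilt F (HS F SF)) as [_ [_ Hm]].
      apply Hm; apply Heq; auto.
  - intros GG HGG.
    exists (fun F => FF F /\ forall x, bigcap GG x -> F x). split.
    + intros F [? _]; auto.
    + intros x; split.
      * intros Hx F [_ HF]. auto.
      * intros Hx G' HG'. destruct (HGG G' HG') as [S [HS Heq]].
        apply Heq. intros F SF. apply Hx. split; [auto|].
        intros y Hy. apply (proj1 (Heq y)); [exact (Hy G' HG')|exact SF].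
  - intros H G [S [HS Heq]] _.
    exists (fun F' => FF F' /\ exists F b, S F /\ G b /\
              same_set F' (fun x => F (join L x b))).
    split.
    + intros F [? _]; auto.
    + intros x; split.
      * intros Hx F' [_ [F [b [SF [Gb HF']]]]]. apply HF'.
        rewrite join_comm. apply Heq; auto.
      * intros Hx b Gb. apply Heq. intros F SF.
        destruct (hclosed F b (HS F SF)) as [F' [FF' HF']].
        rewrite join_comm. apply HF'. apply Hx. split; [auto|].
        exists F, b. auto.
Qed.
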